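(* Let $Z\in\{0,1\}$, $S(1),S(0)\in\{0,1\}$ and a covariate vector $\mathbf{X}$ be random variables with $Z\perp\!\!\!\perp\{S(1),S(0),\mathbf{X}\}$ and observed $S=S(Z)$. Assume Monotonicity, $S(1)\ge S(0)$ almost surely. Then for any function $h$ of the covariates (with finite moments), $$E\{w_{1,s\bar{s}}(\mathbf{X})h(\mathbf{X})\mid Z=1,S=1\} = E\{w_{0,s\bar{s}}(\mathbf{X})h(\mathbf{X})\mid Z=0,S=0\},$$ $$E\{h(\mathbf{X})\mid Z=1,S=0\} = E\{w_{0,\bar{s}\bar{s}}(\mathbf{X})h(\mathbf{X})\mid Z=0,S=0\},$$ $$E\{w_{1,ss}(\mathbf{X})h(\mathbf{X})\mid Z=1,S=1\} = E\{h(\mathbf{X})\mid Z=0,S=1\},$$ where $w_{1,s\bar{s}}(\mathbf{X}) = \frac{e_{s\bar{s}}(\mathbf{X})}{e_{s\bar{s}}(\mathbf{X})+e_{ss}(\mathbf{X})}\Big/\frac{\pi_{s\bar{s}}}{\pi_{s\bar{s}}+\pi_{ss}}$, $w_{0,s\bar{s}}(\mathbf{X}) = \frac{e_{s\bar{s}}(\mathbf{X})}{e_{s\bar{s}}(\mathbf{X})+e_{\bar{s}\bar{s}}(\mathbf{X})}\Big/\frac{\pi_{s\bar{s}}}{\pi_{s\bar{s}}+\pi_{\bar{s}\bar{s}}}$, $w_{0,\bar{s}\bar{s}}(\mathbf{X}) = \frac{e_{\bar{s}\bar{s}}(\mathbf{X})}{e_{s\bar{s}}(\mathbf{X})+e_{\bar{s}\bar{s}}(\mathbf{X})}\Big/\frac{\pi_{\bar{s}\bar{s}}}{\pi_{s\bar{s}}+\pi_{\bar{s}\bar{s}}}$,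 $w_{1,ss}(\mathbf{X}) = \frac{e_{ss}(\mathbf{X})}{e_{s\bar{s}}(\mathbf{X})+e_{ss}(\mathbf{X})}\Big/\frac{\pi_{ss}}{\pi_{s\bar{s}}+\pi_{ss}}$.
   Context: The principal stratum is $U=(S(1),S(0))$, whose values $(1,1),(1,0),(0,1),(0,0)$ are labelled $ss, s\bar{s}, \bar{s}s, \bar{s}\bar{s}$. Principal scores: $e_u(\mathbf{X}) = \Pr(U=u\mid \mathbf{X})$; proportions $\pi_u=\Pr(U=u)$. All conditioning events and denominators are assumed positive. *)

(* Defs.v *)
From HB Require Import structures.
From mathcomp Require Import all_boot all_order all_algebra.
From mathcomp Require Import all_classical all_reals all_analysis.
Set Implicit Arguments. Unset Strict Implicit. Unset Printing Implicit Defensive.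
Import Order.TTheory GRing.Theory Num.Theory.
Local Open Scope classical_set_scope.
Local Open Scope ring_scope.

Section Defs.
Context {R : realType} {d dX : measure_display}
  {T : measurableType d} {XT : measurableType dX}.

Definition cond_exp (P : probability T R) (A : set T) (Y : T -> R) : R :=
  Rintegral P A Y / fine (P A).

Definition stratum (S1 S0 : T -> bool) (u : bool * bool) : set T :=
  [set w | (S1 w, S0 w) = u].

Definition ss : bool * bool := (true, true).
Definition ssbar : bool * bool := (true, false).
Definition sbars : bool * bool := (false, true).
Definition sbarsbar : bool * bool := (false, false).

Definition pi_u (P : probability T R) (S1 S0 : T -> bool) (u : bool * bool) : R :=
  fine (P (stratum S1 S0 u)).

(* e : XT -> R is (a version of) the conditional probability Pr(A | X),
   i.e. e(X) is an integrable sigma(X)-measurable r.v. with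
   E[e(X) 1_{X in B}] = P(A /\ X in B) for every measurable B. *)
Definition is_cond_prob_given (P : probability T R) (X : T -> XT)
    (A : set T) (e : XT -> R) : Prop :=
  [/\ measurable_fun setT e,
      P.-integrable setT (EFin \o (e \o X)) &
      forall B : set XT, measurable B ->
        P (A `&` X @^-1` B) = (\int[P]_(w in X @^-1` B) (e (X w))%:E)%E].

Definition indep_Z (P : probability T R) (Z S1 S0 : T -> bool) (X : T -> XT)
  : Prop :=
  forall (b : bool) (u : bool * bool) (B : set XT), measurable B ->
    P ([set w | Z w = b] `&` (stratum S1 S0 u `&` X @^-1` B)) =
    (P [set w | Z w = b] * P (stratum S1 S0 u `&` X @^-1` B))%E.

Definition S_obs (Z S1 S0 : T -> bool) (w : T) : bool :=
  if Z w then S1 w else S0 w.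

Definition ev (Z S1 S0 : T -> bool) (z s : bool) : set T :=
  [set w | Z w = z /\ S_obs Z S1 S0 w = s].

End Defs.

(* weights; e : principal scores indexed by strata, pi : proportions *)
Section Weights.
Context {R : realType} {XT : Type}.
Variables (e : bool * bool -> XT -> R) (pi : bool * bool -> R).

Definition w1_ssbar (x : XT) : R :=
  (e ssbar x / (e ssbar x + e ss x)) / (pi ssbar / (pi ssbar + pi ss)).
Definition w0_ssbar (x : XT) : R :=
  (e ssbar x / (e ssbar x + e sbarsbar x)) / (pi ssbar / (pi ssbar + pi sbarsbar)).
Definition w0_sbarsbar (x : XT) : R :=
  (e sbarsbar x / (e ssbar x + e sbarsbar x)) / (pi sbarsbar / (pi ssbar + pi sbarsbar)).
Definition w1_ss (x : XT) : R :=
  (e ss x / (e ssbar x + e ss x)) / (pi ss / (pi ssbar + pi ss)).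
End Weights.

(* Main.v *)
Require Import Defs.
From HB Require Import structures.
From mathcomp Require Import all_boot all_order all_algebra.
From mathcomp Require Import all_classical all_reals all_analysis.
From mathcomp Require Import measurable_realfun.
From mathcomp.algebra_tactics Require Import ring lra.
Import Order.TTheory GRing.Theory Num.Theory.
Local Open Scope classical_set_scope.
Local Open Scope ring_scope.

Lemma measurable_invR (R : realType) : measurable_fun setT (@GRing.inv R).
Proof.
rewrite (_ : setT = ~` [set 0] `|` [set 0]); last first.
  apply/seteqP; split => x //= _; have [->|] := eqVneq x 0; [by right|left]. exact/eqP.
apply/measurable_funU => //; first by apply: measurableC.
split; last exact: measurable_fun_set1.
apply: open_continuous_measurable_fun.
  rewrite openC; apply: accessible_closed_set1; exact: hausdorff_accessible.
move=> x /set_mem /eqP x0; exact: inv_continuous.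
Qed.
Section G.
Local Open Scope ereal_scope.
Context d (T : measurableType d) (R : realType) (mu : probability T R)
  (nu : {finite_measure set T -> \bar R}) (c : T -> R).
Hypotheses (mc : measurable_fun setT c) (ic : mu.-integrable setT (EFin \o c))
  (hc : forall B, measurable B -> nu B = \int[mu]_(x in B) (c x)%:E).

Lemma G_dom : nu `<< mu.
Proof.
apply/null_content_dominatesP => A mA muA.
rewrite hc // null_set_integral //.
apply/measurable_EFinP; exact: measurable_funTS.
Qed.

Let f := Radon_Nikodym_SigmaFinite.f nu mu.

Lemma G_ae : ae_eq mu setT f (EFin \o c).
Proof.
apply: integral_ae_eq => //.
- exact: (Radon_Nikodym_SigmaFinite.f_integrable G_dom).
- exact/measurable_EFinP.
- move=> E _ mE; rewrite -Radon_Nikodym_SigmaFinite.f_integral //; last exact: G_dom.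
  by rewrite hc.
Qed.

Lemma G_ge0 : {ae mu, forall x, (0 <= c x)%R}.
Proof.
have := G_ae; apply: filterS => x /(_ I) /= fc; rewrite -lee_fin -fc.
exact: (Radon_Nikodym_SigmaFinite.f_ge0 G_dom).
Qed.

Lemma G_int_ge0 (g : T -> \bar R) : measurable_fun setT g -> (forall x, 0 <= g x) ->
  \int[nu]_x g x = \int[mu]_x (g x * (c x)%:E).
Proof.
move=> mg g0.
rewrite -(Radon_Nikodym_SigmaFinite.change_of_variables G_dom) //.
apply: ae_eq_integral => //.
- apply: emeasurable_funM => //.
  exact: measurable_int (Radon_Nikodym_SigmaFinite.f_integrable G_dom).
- apply: emeasurable_funM => //; exact/measurable_EFinP.
- exact: (ae_eqe_mul2l g G_ae).
Qed.

Lemma G_int (g : T -> \bar R) : nu.-integrable setT g ->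
  \int[nu]_x g x = \int[mu]_x (g x * (c x)%:E).
Proof.
move=> ig.
rewrite -(Radon_Nikodym_change_of_variables G_dom) //.
apply: ae_eq_integral => //.
- apply: emeasurable_funM => //. exact: (measurable_int _ ig).
- apply: (measurable_int mu); apply: Radon_Nikodym_integrable; exact: G_dom.
- apply: emeasurable_funM; first exact: (measurable_int _ ig).
  exact/measurable_EFinP.
- apply: ae_eqe_mul2l.
  apply: ae_eq_trans; last exact: G_ae.
  apply: ae_eq_sym; apply: ae_eq_Radon_Nikodym_SigmaFinite => //; exact: G_dom.
Qed.

End G.
Arguments G_ge0 {d T R mu nu c}.
Arguments G_int_ge0 {d T R mu nu c}.
Arguments G_int {d T R mu nu c}.
Section Transfer.
Local Open Scope ereal_scope.
Context {R : realType} {d dX : measure_display} {T : measurableType d}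
  {XT : measurableType dX} (P : probability T R) (X : T -> XT)
  (mX : measurable_fun setT X).

Let mpre B : measurable B -> measurable (X @^-1` B).
Proof. by move=> mB; rewrite -[X in measurable X]setTI; exact: mX. Qed.

Definition muX : set XT -> \bar R := fun B => P (X @^-1` B).

Let muX0 : muX set0 = 0.
Proof. by rewrite /muX preimage_set0 measure0. Qed.
Let muX_ge0 B : 0 <= muX B.
Proof. exact: measure_ge0. Qed.
Let muX_sa : semi_sigma_additive muX.
Proof.
move=> F mF tF mUF; rewrite /muX preimage_bigcup.
apply: measure_semi_sigma_additive.
- by move=> n; exact: mpre.
- apply/trivIsetP => /= i j _ _ ij; rewrite -preimage_setI.
  by move/trivIsetP : tF => /(_ _ _ _ _ ij) ->//; rewrite preimage_set0.
- by rewrite -preimage_bigcup; exact: mpre.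
Qed.
HB.instance Definition _ := isMeasure.Build _ _ _ muX muX0 muX_ge0 muX_sa.
Let muX_setT : muX setT = 1.
Proof. by rewrite /muX preimage_setT probability_setT. Qed.
HB.instance Definition _ := Measure_isProbability.Build _ _ _ muX muX_setT.

Lemma muX_integral D (g : XT -> \bar R) : measurable D -> measurable_fun setT g ->
  P.-integrable (X @^-1` D) (g \o X) ->
  \int[muX]_(x in D) g x = \int[P]_(x in X @^-1` D) (g \o X) x.
Proof.
move=> mD mg ig.
have -> : \int[muX]_(x in D) g x = \int[pushforward P X]_(x in D) g x by [].
by rewrite integral_pushforward.
Qed.

Lemma muX_integrable D (g : XT -> \bar R) : measurable D -> measurable_fun setT g ->
  P.-integrable (X @^-1` D) (g \o X) -> muX.-integrable D g.
Proof.
move=> mD mg ig.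
have -> : muX.-integrable D g = (pushforward P X).-integrable D g by [].
exact: integrable_pushforward.
Qed.

Lemma muX_ge0_integral D (g : XT -> \bar R) : measurable D -> measurable_fun setT g ->
  (forall x, 0 <= g x) ->
  \int[muX]_(x in D) g x = \int[P]_(x in X @^-1` D) (g \o X) x.
Proof.
move=> mD mg g0.
have -> : \int[muX]_(x in D) g x = \int[pushforward P X]_(x in D) g x by [].
by rewrite ge0_integral_pushforward //; exact: measurable_funTS.
Qed.

Section Event.
Context (A : set T) (mA : measurable A).

Definition nuT : set T -> \bar R := fun E => P (A `&` E).
Let nuT0 : nuT set0 = 0.
Proof. by rewrite /nuT setI0 measure0. Qed.
Let nuT_ge0 B : 0 <= nuT B.
Proof. exact: measure_ge0. Qed.
Let nuT_sa : semi_sigma_additive nuT.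
Proof.
move=> F mF tF mUF; rewrite /nuT setI_bigcupr.
apply: measure_semi_sigma_additive.
- by move=> n; exact: measurableI.
- apply/trivIsetP => /= i j _ _ ij.
  move/trivIsetP : tF => /(_ i j I I ij) Fij.
  by rewrite setIACA setIid Fij setI0.
- by rewrite -setI_bigcupr; exact: measurableI.
Qed.
HB.instance Definition _ := isMeasure.Build _ _ _ nuT nuT0 nuT_ge0 nuT_sa.
Let nuT_fin : fin_num_fun nuT.
Proof.
move=> E mE; rewrite ge0_fin_numE ?measure_ge0 //.
by apply: (le_lt_trans (probability_le1 _ _)) => //; [exact: measurableI|rewrite ltry].
Qed.
HB.instance Definition _ := Measure_isFinite.Build _ _ _ nuT nuT_fin.

Definition nuX : set XT -> \bar R := fun B => P (A `&` X @^-1` B).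
Let nuX0 : nuX set0 = 0.
Proof. by rewrite /nuX preimage_set0 setI0 measure0. Qed.
Let nuX_ge0 B : 0 <= nuX B.
Proof. exact: measure_ge0. Qed.
Let nuX_sa : semi_sigma_additive nuX.
Proof.
move=> F mF tF mUF; rewrite /nuX preimage_bigcup setI_bigcupr.
apply: measure_semi_sigma_additive.
- by move=> n; apply: measurableI => //; exact: mpre.
- apply/trivIsetP => /= i j _ _ ij.
  move/trivIsetP : tF => /(_ i j I I ij) Fij.
  by rewrite setIACA setIid -preimage_setI Fij preimage_set0 setI0.
- by rewrite -setI_bigcupr -preimage_bigcup; apply: measurableI => //; exact: mpre.
Qed.
HB.instance Definition _ := isMeasure.Build _ _ _ nuX nuX0 nuX_ge0 nuX_sa.
Let nuX_fin : fin_num_fun nuX.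
Proof.
move=> E mE; rewrite ge0_fin_numE ?measure_ge0 //.
apply: (le_lt_trans (probability_le1 _ _)) => //; last by rewrite ltry.
by apply: measurableI => //; exact: mpre.
Qed.
HB.instance Definition _ := Measure_isFinite.Build _ _ _ nuX nuX_fin.

Let G1 := G_int_ge0 (mu:=P) (nu:=nuT) (c:=\1_A) (@measurable_indic _ _ _ setT A mA)
  (fun E mE => esym (integral_indic P mE mA)).
Let G2 := G_int (mu:=P) (nu:=nuT) (c:=\1_A) (@measurable_indic _ _ _ setT A mA)
  (fun E mE => esym (integral_indic P mE mA)).

Let patch_indic (F : T -> \bar R) x : (F \_ A) x = F x * (\1_A x)%:E.
Proof.
rewrite patchE indicE; case: ifPn => _; first by rewrite mule1.
by rewrite mule0.
Qed.

Lemma bridgeT_ge0 F : measurable_fun setT F -> (forall x, 0 <= F x) ->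
  \int[nuT]_x F x = \int[P]_(x in A) F x.
Proof.
move=> mF F0; rewrite G1 // [RHS]integral_mkcond.
by apply: eq_integral => x _; rewrite patch_indic.
Qed.

Lemma bridgeT_integrable F : measurable_fun setT F -> P.-integrable A F ->
  nuT.-integrable setT F.
Proof.
move=> mF /integrableP [_ iF]; apply/integrableP; split => //.
rewrite bridgeT_ge0 //; exact: measurableT_comp.
Qed.

Lemma bridgeT_int F : measurable_fun setT F -> P.-integrable A F ->
  \int[nuT]_x F x = \int[P]_(x in A) F x.
Proof.
move=> mF iF; rewrite G2; last exact: bridgeT_integrable.
rewrite [RHS]integral_mkcond.
by apply: eq_integral => x _; rewrite patch_indic.
Qed.

Lemma bridgeX_ge0 (g : XT -> \bar R) : measurable_fun setT g -> (forall x, 0 <= g x) ->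
  \int[nuX]_x g x = \int[nuT]_x (g \o X) x.
Proof.
move=> mg g0.
have -> : \int[nuX]_x g x = \int[pushforward nuT X]_x g x by [].
by rewrite ge0_integral_pushforward.
Qed.

Lemma bridgeX_int (g : XT -> \bar R) : measurable_fun setT g ->
  nuT.-integrable setT (g \o X) ->
  nuX.-integrable setT g /\ \int[nuX]_x g x = \int[nuT]_x (g \o X) x.
Proof.
move=> mg ig; split.
  have -> : nuX.-integrable setT g = (pushforward nuT X).-integrable setT g by [].
  exact: integrable_pushforward.
have -> : \int[nuX]_x g x = \int[pushforward nuT X]_x g x by [].
by rewrite integral_pushforward.
Qed.

Variable c : XT -> R.
Hypotheses (mc : measurable_fun setT c)
  (hc : forall B, measurable B -> P (A `&` X @^-1` B) = \int[muX]_(x in B) (c x)%:E).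

Lemma c_ae_ge0 : {ae muX, forall x, (0 <= c x)%R}.
Proof. exact: (G_ge0 (nu:=nuX) mc hc). Qed.

Lemma transfer_ge0 (g : XT -> \bar R) : measurable_fun setT g -> (forall x, 0 <= g x) ->
  \int[P]_(w in A) g (X w) = \int[muX]_x (g x * (c x)%:E).
Proof.
move=> mg g0.
rewrite -(G_int_ge0 (nu:=nuX) mc hc) // bridgeX_ge0 // bridgeT_ge0 //.
- exact: measurableT_comp.
- by move=> x; exact: g0.
Qed.

Lemma transfer_int (g : XT -> \bar R) : measurable_fun setT g ->
  P.-integrable A (g \o X) ->
  \int[P]_(w in A) g (X w) = \int[muX]_x (g x * (c x)%:E).
Proof.
move=> mg ig.
have mgX : measurable_fun setT (g \o X) by exact: measurableT_comp.
have iT := @bridgeT_integrable (g \o X) mgX ig.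
have [iX eX] := @bridgeX_int g mg iT.
rewrite -(G_int (nu:=nuX) mc hc) // eX bridgeT_int //.
Qed.

End Event.

Section Main.
Local Open Scope ereal_scope.
Context (Z S1 S0 : T -> bool) (e : bool * bool -> XT -> R) (h : XT -> R).
Hypotheses (mZ : measurable [set w | Z w]) (mS1 : measurable [set w | S1 w])
  (mS0 : measurable [set w | S0 w]) (hind : indep_Z P Z S1 S0 X)
  (hmono : P (stratum S1 S0 sbars) = 0)
  (he : forall u, is_cond_prob_given P X (stratum S1 S0 u) (e u))
  (mh : measurable_fun setT h) (ih : P.-integrable setT (EFin \o (h \o X))).

Lemma mbool (f : T -> bool) : measurable [set w | f w] ->
  forall b, measurable [set w | f w = b].
Proof.
move=> mf [] //.
rewrite (_ : [set w | f w = false] = ~` [set w | f w]); first exact: measurableC.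
by apply/seteqP; split => w /=; case: (f w).
Qed.

Lemma mstrat u : measurable (stratum S1 S0 u).
Proof.
case: u => a b.
rewrite (_ : stratum S1 S0 (a, b) = [set w | S1 w = a] `&` [set w | S0 w = b]).
  by apply: measurableI; exact: mbool.
apply/seteqP; split => w /=; rewrite /stratum /=.
  by case=> -> ->.
by case=> -> ->.
Qed.

Lemma PE (A : set T) : measurable A -> P A = (fine (P A))%:E.
Proof. by move=> mA; rewrite fineK // fin_num_measure. Qed.

Lemma me u : measurable_fun setT (e u).
Proof. by case: (he u). Qed.

Lemma ie u : muX.-integrable setT (EFin \o e u).
Proof.
case: (he u) => meu ieu _.
by apply: muX_integrable => //; exact/measurable_EFinP.
Qed.

Lemma hc_strat u B : measurable B ->
  P (stratum S1 S0 u `&` X @^-1` B) = \int[muX]_(x in B) (e u x)%:E.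
Proof.
move=> mB; case: (he u) => meu ieu ->//.
rewrite muX_integral //; first exact/measurable_EFinP.
apply: integrableS ieu => //; exact: mpre.
Qed.

Lemma int_eh u : muX.-integrable setT (fun x => (e u x * h x)%:E).
Proof.
apply/integrableP; split.
  apply/measurable_EFinP; apply: measurable_funM => //; exact: me.
rewrite (@ae_eq_integral _ _ _ muX setT (fun x => `|h x|%:E * (e u x)%:E)) //.
- rewrite -(transfer_ge0 _ (mstrat u) _ (me u) (hc_strat u)) //.
  + apply: (@le_lt_trans _ _ (\int[P]_w `|(h (X w))%:E|)); last first.
      by case/integrableP: ih.
    under [X in _ <= X]eq_integral do rewrite abse_EFin.
    apply: (@ge0_subset_integral _ _ _ P _ _ (mstrat u) measurableT) => //.
    apply/measurable_EFinP; apply: measurableT_comp => //; exact: measurableT_comp.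
  + apply/measurable_EFinP; exact: measurableT_comp.
- apply: measurableT_comp => //; apply/measurable_EFinP.
  apply: measurable_funM => //; exact: me.
- apply: emeasurable_funM; apply/measurable_EFinP => //; [exact: measurableT_comp|exact: me].
- apply: filterS (c_ae_ge0 _ (mstrat u) _ (me u) (hc_strat u)) => x ex _.
  by rewrite abse_EFin -EFinM normrM (ger0_norm ex) mulrC.
Qed.

Definition Zb b := [set w | Z w = b].
Definition pz b := fine (P (Zb b)).
Definition Iu u := fine (\int[muX]_x (e u x * h x)%:E).
Definition cev z u1 u2 x := (pz z * (e u1 x + e u2 x))%R.

Lemma mZb b : measurable (Zb b).
Proof. exact: mbool. Qed.

Lemma ie_on u B : measurable B -> muX.-integrable B (EFin \o e u).
Proof. by move=> mB; apply: integrableS (ie u). Qed.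

Lemma indep_strat b u B : measurable B ->
  P (Zb b `&` (stratum S1 S0 u `&` X @^-1` B)) = \int[muX]_(x in B) (pz b * e u x)%:E.
Proof.
move=> mB; rewrite hind // hc_strat // (PE _ (mZb b)).
under [RHS]eq_integral do rewrite EFinM.
by rewrite integralZl //; exact: ie_on.
Qed.

Section Split.
Variables (z s : bool) (u1 u2 : bool * bool).
Hypotheses (hiff : forall w, ev Z S1 S0 z s w <->
   Z w = z /\ (stratum S1 S0 u1 w \/ stratum S1 S0 u2 w))
  (u12 : u1 != u2).

Lemma ev_eq : ev Z S1 S0 z s = Zb z `&` (stratum S1 S0 u1 `|` stratum S1 S0 u2).
Proof. by apply/seteqP; split => w /hiff. Qed.

Lemma mev : measurable (ev Z S1 S0 z s).
Proof. rewrite ev_eq; apply: measurableI; [exact: mZb|apply: measurableU; exact: mstrat]. Qed.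

Lemma ev_split0 B : measurable B ->
  P (ev Z S1 S0 z s `&` X @^-1` B) =
  P (Zb z `&` (stratum S1 S0 u1 `&` X @^-1` B)) +
  P (Zb z `&` (stratum S1 S0 u2 `&` X @^-1` B)).
Proof.
move=> mB; rewrite -measureU //.
- congr (P _); rewrite ev_eq; apply/seteqP; split => w /=.
    by move=> [[zw [s1|s2]] xb]; [left|right].
  by move=> [[zw [s1 xb]]|[zw [s2 xb]]]; split => //; split => //; [left|right].
- apply: measurableI; first exact: mZb.
  apply: measurableI; [exact: mstrat|exact: mpre].
- apply: measurableI; first exact: mZb.
  apply: measurableI; [exact: mstrat|exact: mpre].
- apply/seteqP; split => w //= [[_ [s1 _]] [_ [s2 _]]].
  by move: u12; rewrite -s1 -s2 /stratum eqxx.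
Qed.

Lemma ev_split B : measurable B ->
  P (ev Z S1 S0 z s `&` X @^-1` B) = \int[muX]_(x in B) (cev z u1 u2 x)%:E.
Proof.
move=> mB; rewrite ev_split0 // !indep_strat // -integralD //.
- by apply: eq_integral => x _; rewrite /cev mulrDr EFinD.
- under eq_fun do rewrite EFinM; apply: integrableZl => //; exact: ie_on.
- under eq_fun do rewrite EFinM; apply: integrableZl => //; exact: ie_on.
Qed.

Lemma Pev : fine (P (ev Z S1 S0 z s)) = (pz z * (pi_u P S1 S0 u1 + pi_u P S1 S0 u2))%R.
Proof.
have := @ev_split0 setT measurableT; rewrite !hind // !preimage_setT !setIT => ->.
rewrite (PE _ (mZb z)) (PE _ (mstrat u1)) (PE _ (mstrat u2)) -!EFinM -EFinD /=.
by rewrite /pz /pi_u mulrDr.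
Qed.

Lemma mcev : measurable_fun setT (cev z u1 u2).
Proof. apply: measurable_funM => //; apply: measurable_funD; exact: me. Qed.

Lemma Rint_ev (g : XT -> R) (K1 K2 : R) : measurable_fun setT g ->
  P.-integrable (ev Z S1 S0 z s) (EFin \o (g \o X)) ->
  (forall x, g x * cev z u1 u2 x = K1 * (e u1 x * h x) + K2 * (e u2 x * h x))%R ->
  Rintegral P (ev Z S1 S0 z s) (fun w => g (X w)) = (K1 * Iu u1 + K2 * Iu u2)%R.
Proof.
move=> mg ig hg.
rewrite /Rintegral (transfer_int _ mev _ mcev ev_split (EFin \o g)) //; last first.
  exact/measurable_EFinP.
under eq_integral do rewrite /= -EFinM hg EFinD !EFinM.
rewrite integralD //; last 2 first.
- apply: integrableZl => //; exact: int_eh.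
- apply: integrableZl => //; exact: int_eh.
rewrite !integralZl //; try exact: int_eh.
rewrite fineD ?fin_numM // ?integrable_fin_num //; try exact: int_eh.
by rewrite !fineM // integrable_fin_num //; exact: int_eh.
Qed.

Lemma wint (g : XT -> R) (K1 K2 : R) : measurable_fun setT g ->
  (forall x, 0 <= cev z u1 u2 x)%R ->
  (forall x, g x * cev z u1 u2 x = K1 * (e u1 x * h x) + K2 * (e u2 x * h x))%R ->
  P.-integrable (ev Z S1 S0 z s) (EFin \o (g \o X)).
Proof.
move=> mg c0 hg; apply/integrableP; split.
  apply: measurable_funTS; apply/measurable_EFinP; exact: measurableT_comp.
have iF : muX.-integrable setT
    (fun x => (K1 * (e u1 x * h x) + K2 * (e u2 x * h x))%:E).
  under eq_fun do rewrite EFinD [(K1 * _)%:E]EFinM [(K2 * _)%:E]EFinM.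
  by apply: integrableD => //; apply: integrableZl => //; exact: int_eh.
rewrite (_ : \int[P]_(x in _) _ =
    \int[muX]_x (`|(g x)%:E| * (cev z u1 u2 x)%:E)); last first.
  apply: (transfer_ge0 _ mev _ mcev ev_split (fun x => `|(g x)%:E|)) => //.
  apply: measurableT_comp => //; exact/measurable_EFinP.
under eq_integral => x _.
  rewrite abse_EFin -EFinM -(ger0_norm (c0 x)) -normrM hg -abse_EFin.
  over.
by case/integrableP: iF.
Qed.
End Split.
Lemma Iu_null u : P (stratum S1 S0 u) = 0 -> Iu u = 0%R.
Proof.
move=> Pu.
have mEh : measurable_fun setT (EFin \o h) by exact/measurable_EFinP.
have := transfer_int _ (mstrat u) _ (me u) (hc_strat u) (EFin \o h) mEh
  (integrableS measurableT (mstrat u) (subsetT _) ih).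
rewrite null_set_integral //; do ?[exact: mstrat |
  by apply/measurable_EFinP; apply: measurable_funTS; exact: measurableT_comp].
move=> H0; rewrite /Iu (_ : \int[muX]_x (e u x * h x)%:E = 0) //.
by rewrite H0; apply: eq_integral => x _; rewrite /= -EFinM mulrC.
Qed.

Lemma iff11 w : ev Z S1 S0 true true w <-> Z w = true /\ (stratum S1 S0 ss w \/ stratum S1 S0 ssbar w).
Proof.
rewrite /ev /S_obs /stratum /ss /ssbar /=.
by case: (Z w); case: (S1 w); case: (S0 w); split => //=; intuition discriminate.
Qed.
Lemma iff10 w : ev Z S1 S0 true false w <-> Z w = true /\ (stratum S1 S0 sbars w \/ stratum S1 S0 sbarsbar w).
Proof.
rewrite /ev /S_obs /stratum /sbars /sbarsbar /=.
by case: (Z w); case: (S1 w); case: (S0 w); split => //=; intuition discriminate.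
Qed.
Lemma iff00 w : ev Z S1 S0 false false w <-> Z w = false /\ (stratum S1 S0 ssbar w \/ stratum S1 S0 sbarsbar w).
Proof.
rewrite /ev /S_obs /stratum /ssbar /sbarsbar /=.
by case: (Z w); case: (S1 w); case: (S0 w); split => //=; intuition discriminate.
Qed.
Lemma iff01 w : ev Z S1 S0 false true w <-> Z w = false /\ (stratum S1 S0 ss w \/ stratum S1 S0 sbars w).
Proof.
rewrite /ev /S_obs /stratum /ss /sbars /=.
by case: (Z w); case: (S1 w); case: (S0 w); split => //=; intuition discriminate.
Qed.
Lemma mratio u u1 u2 (k : R) :
  measurable_fun setT (fun x => (e u x / (e u1 x + e u2 x)) / k * h x)%R.
Proof.
apply: measurable_funM => //; apply: measurable_funM => //.
apply: measurable_funM; first exact: me.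
apply: (measurableT_comp (measurable_invR R)); apply: measurable_funD; exact: me.
Qed.

Lemma main_lemma
  (hpos : forall z s : bool, (0 < P (ev Z S1 S0 z s))%E)
  (pss : (0 < pi_u P S1 S0 ss)%R) (psb : (0 < pi_u P S1 S0 ssbar)%R)
  (pbb : (0 < pi_u P S1 S0 sbarsbar)%R)
  (he1 : forall x, (0 < e ssbar x + e ss x)%R)
  (he2 : forall x, (0 < e ssbar x + e sbarsbar x)%R) :
  let pi := pi_u P S1 S0 in
  [/\ cond_exp P (ev Z S1 S0 true true) (fun w => w1_ssbar e pi (X w) * h (X w))
      = cond_exp P (ev Z S1 S0 false false) (fun w => w0_ssbar e pi (X w) * h (X w)),
      cond_exp P (ev Z S1 S0 true false) (fun w => h (X w))
      = cond_exp P (ev Z S1 S0 false false) (fun w => w0_sbarsbar e pi (X w) * h (X w))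
    & cond_exp P (ev Z S1 S0 true true) (fun w => w1_ss e pi (X w) * h (X w))
      = cond_exp P (ev Z S1 S0 false true) (fun w => h (X w))]%R.
Proof.
move=> pi; rewrite /pi.
have pzpos b : (0 < pz b)%R.
  have mev' : measurable (ev Z S1 S0 b b).
    by case: b; [exact: (mev _ _ _ _ iff11) | exact: (mev _ _ _ _ iff00)].
  apply: fine_gt0; apply/andP; split.
    apply: (lt_le_trans (hpos b b)); apply: le_measure.
    - by rewrite inE.
    - by rewrite inE; exact: mZb.
    - by move=> w [].
  by rewrite (PE _ (mZb b)) ltry.
have p0 : pi_u P S1 S0 sbars = 0%R by rewrite /pi_u hmono.
have I0 : Iu sbars = 0%R := Iu_null _ hmono.
have ih_ev z s u1 u2 (hiff : forall w, ev Z S1 S0 z s w <->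
   Z w = z /\ (stratum S1 S0 u1 w \/ stratum S1 S0 u2 w)) :
    P.-integrable (ev Z S1 S0 z s) (EFin \o (h \o X)).
  exact: integrableS measurableT (mev _ _ _ _ hiff) (subsetT _) ih.
have c_nn z u1 u2 : (forall x, 0 < e u1 x + e u2 x)%R ->
    forall x, (0 <= cev z u1 u2 x)%R.
  by move=> H x; apply: mulr_ge0; [exact: ltW|exact: ltW].
have he1' x : (0 < e ss x + e ssbar x)%R by rewrite addrC.
have hgA x : (w1_ssbar e (pi_u P S1 S0) x * h x * cev true ss ssbar x =
    0 * (e ss x * h x) + (pz true * (pi_u P S1 S0 ssbar + pi_u P S1 S0 ss)
      / pi_u P S1 S0 ssbar) * (e ssbar x * h x))%R.
  rewrite /w1_ssbar /cev; have := he1 x => ?.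
  by field; rewrite ?gt_eqF //; lra.
have hgB x : (w0_ssbar e (pi_u P S1 S0) x * h x * cev false ssbar sbarsbar x =
    (pz false * (pi_u P S1 S0 ssbar + pi_u P S1 S0 sbarsbar)
      / pi_u P S1 S0 ssbar) * (e ssbar x * h x) + 0 * (e sbarsbar x * h x))%R.
  rewrite /w0_ssbar /cev; have := he2 x => ?.
  by field; rewrite ?gt_eqF //; lra.
have hgC x : (h x * cev true sbars sbarsbar x =
    pz true * (e sbars x * h x) + pz true * (e sbarsbar x * h x))%R.
  by rewrite /cev; ring.
have hgD x : (w0_sbarsbar e (pi_u P S1 S0) x * h x * cev false ssbar sbarsbar x =
    0 * (e ssbar x * h x) + (pz false * (pi_u P S1 S0 ssbar + pi_u P S1 S0 sbarsbar)
      / pi_u P S1 S0 sbarsbar) * (e sbarsbar x * h x))%R.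
  rewrite /w0_sbarsbar /cev; have := he2 x => ?.
  by field; rewrite ?gt_eqF //; lra.
have hgE x : (w1_ss e (pi_u P S1 S0) x * h x * cev true ss ssbar x =
    (pz true * (pi_u P S1 S0 ssbar + pi_u P S1 S0 ss)
      / pi_u P S1 S0 ss) * (e ss x * h x) + 0 * (e ssbar x * h x))%R.
  rewrite /w1_ss /cev; have := he1 x => ?.
  by field; rewrite ?gt_eqF //; lra.
have hgF x : (h x * cev false ss sbars x =
    pz false * (e ss x * h x) + pz false * (e sbars x * h x))%R.
  by rewrite /cev; ring.
have mA : measurable_fun setT (fun x => w1_ssbar e (pi_u P S1 S0) x * h x)%R
  := mratio ssbar ssbar ss _.
have mB : measurable_fun setT (fun x => w0_ssbar e (pi_u P S1 S0) x * h x)%R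
  := mratio ssbar ssbar sbarsbar _.
have mD : measurable_fun setT (fun x => w0_sbarsbar e (pi_u P S1 S0) x * h x)%R
  := mratio sbarsbar ssbar sbarsbar _.
have mE : measurable_fun setT (fun x => w1_ss e (pi_u P S1 S0) x * h x)%R
  := mratio ss ssbar ss _.
have LA : Rintegral P (ev Z S1 S0 true true)
    (fun w => w1_ssbar e (pi_u P S1 S0) (X w) * h (X w))%R = _ :=
  Rint_ev _ _ _ _ iff11 isT _ _ _ mA
    (wint _ _ _ _ iff11 isT _ _ _ mA (c_nn _ _ _ he1') hgA) hgA.
have LB : Rintegral P (ev Z S1 S0 false false)
    (fun w => w0_ssbar e (pi_u P S1 S0) (X w) * h (X w))%R = _ :=
  Rint_ev _ _ _ _ iff00 isT _ _ _ mB
    (wint _ _ _ _ iff00 isT _ _ _ mB (c_nn _ _ _ he2) hgB) hgB.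
have LC : Rintegral P (ev Z S1 S0 true false) (fun w => h (X w)) = _ :=
  Rint_ev _ _ _ _ iff10 isT _ _ _ mh (ih_ev _ _ _ _ iff10) hgC.
have LD : Rintegral P (ev Z S1 S0 false false)
    (fun w => w0_sbarsbar e (pi_u P S1 S0) (X w) * h (X w))%R = _ :=
  Rint_ev _ _ _ _ iff00 isT _ _ _ mD
    (wint _ _ _ _ iff00 isT _ _ _ mD (c_nn _ _ _ he2) hgD) hgD.
have LE : Rintegral P (ev Z S1 S0 true true)
    (fun w => w1_ss e (pi_u P S1 S0) (X w) * h (X w))%R = _ :=
  Rint_ev _ _ _ _ iff11 isT _ _ _ mE
    (wint _ _ _ _ iff11 isT _ _ _ mE (c_nn _ _ _ he1') hgE) hgE.
have LF : Rintegral P (ev Z S1 S0 false true) (fun w => h (X w)) = _ :=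
  Rint_ev _ _ _ _ iff01 isT _ _ _ mh (ih_ev _ _ _ _ iff01) hgF.
have P11 := Pev _ _ _ _ iff11 isT.
have P10 := Pev _ _ _ _ iff10 isT.
have P00 := Pev _ _ _ _ iff00 isT.
have P01 := Pev _ _ _ _ iff01 isT.
have p1 := pzpos true; have p2 := pzpos false.
split; rewrite /cond_exp.
- rewrite LA LB P11 P00.
  by field; rewrite ?gt_eqF //; lra.
- rewrite LC LD P10 P00 I0 p0.
  by field; rewrite ?gt_eqF //; lra.
- rewrite LE LF P11 P01 I0 p0.
  by field; rewrite ?gt_eqF //; lra.
Qed.
End Main.
End Transfer.

Theorem corollary2 (R : realType) (d dX : measure_display)
  (T : measurableType d) (XT : measurableType dX) (P : probability T R)
  (Z S1 S0 : T -> bool) (X : T -> XT) (e : bool * bool -> XT -> R)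
  (h : XT -> R) :
  measurable [set w | Z w] -> measurable [set w | S1 w] ->
  measurable [set w | S0 w] -> measurable_fun setT X ->
  indep_Z P Z S1 S0 X ->
  (* monotonicity: S(1) >= S(0) almost surely *)
  P (stratum S1 S0 sbars) = 0%E ->
  (* principal scores e_u(X) = Pr(U = u | X) *)
  (forall u, is_cond_prob_given P X (stratum S1 S0 u) (e u)) ->
  (* h of the covariates with finite moments *)
  measurable_fun setT h -> P.-integrable setT (EFin \o (h \o X)) ->
  (* conditioning events and denominators positive *)
  (forall z s : bool, (0 < P (ev Z S1 S0 z s))%E) ->
  0 < pi_u P S1 S0 ss -> 0 < pi_u P S1 S0 ssbar -> 0 < pi_u P S1 S0 sbarsbar ->
  (forall x, 0 < e ssbar x + e ss x) ->
  (forall x, 0 < e ssbar x + e sbarsbar x) ->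
  let pi := pi_u P S1 S0 in
  [/\ cond_exp P (ev Z S1 S0 true true) (fun w => w1_ssbar e pi (X w) * h (X w))
      = cond_exp P (ev Z S1 S0 false false) (fun w => w0_ssbar e pi (X w) * h (X w)),
      cond_exp P (ev Z S1 S0 true false) (fun w => h (X w))
      = cond_exp P (ev Z S1 S0 false false) (fun w => w0_sbarsbar e pi (X w) * h (X w))
    & cond_exp P (ev Z S1 S0 true true) (fun w => w1_ss e pi (X w) * h (X w))
      = cond_exp P (ev Z S1 S0 false true) (fun w => h (X w))].
Proof.
move=> mZ mS1 mS0 mX hind hmono he mh ih hpos pss psb pbb he1 he2.
exact: (main_lemma P X mX Z S1 S0 e h mZ mS1 mS0 hind hmono he mh ih hpos pss psb pbb he1 he2).
Qed.
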